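(* Let $\tau>0$ and $f\in C(\mathbb R_+\times\mathbb R,\mathbb R)$ be regular and asymptotically $\tau$-periodic in time, $f=P+R$. Assume the $\tau$-periodic solutions of $x'=P(t,x)$ are isolated, and that for some $u_0$ the solution $\varphi(t,u_0,f)$ of $x'=f(t,x)$, $x(0)=u_0$, is bounded on $\mathbb R_+$. Then $\varphi(t,u_0,f)$ is asymptotically $\tau$-periodic: there is a continuous $\tau$-periodic $p:\mathbb R_+\to\mathbb R$ with $\varphi(t,u_0,f)-p(t)\to0$ as $t\to+\infty$.
   Context: $C(\mathbb R_+\times\mathbb R,\mathbb R)$ has the compact-open topology; $f^h(t,x)=f(t+h,x)$; $H(f)$ is the closure of $\{f^h:h\ge0\}$. $f$ is regular if for every $g\in H(f)$ and $v\in\mathbb R$ the equation $y'=g(t,y)$ has a unique solution $\varphi(t,v,g)$ with $\varphi(0,v,g)=v$, defined on $\mathbb R_+$. $f$ is asymptotically $\tau$-periodic in time if $f=P+R$ with $P,R$ continuous, $P(t+\tau,x)=P(t,x)$, and $R(t,x)\to0$ as $t\to+\infty$ uniformly in $x$ on compact sets. A $\tau$-periodic solution $\varphi(t,u_0,P)$ (i.e. $\varphi(\tau,u_0,P)=u_0$) of $x'=P(t,x)$ is isolated if there is $\delta>0$ such that no $u\ne u_0$ with $|u-u_0|<\delta$ gives a $\tau$-periodic solution $\varphi(t,u,P)$. *)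

(* Defs.v *)
From Stdlib Require Import Reals Lra.
Open Scope R_scope.

(* Elements of C(R_+ x R, R) are represented by functions R -> R -> R;
   only their values on t >= 0 matter. *)

Definition cont_RpR (F : R -> R -> R) : Prop :=
  forall t x, 0 <= t -> forall eps, 0 < eps -> exists delta, 0 < delta /\
    forall t' x', 0 <= t' -> Rabs (t' - t) < delta -> Rabs (x' - x) < delta ->
      Rabs (F t' x' - F t x) < eps.

Definition cont_Rp (p : R -> R) : Prop :=
  forall t, 0 <= t -> forall eps, 0 < eps -> exists delta, 0 < delta /\
    forall t', 0 <= t' -> Rabs (t' - t) < delta -> Rabs (p t' - p t) < eps.

Definition shift (f : R -> R -> R) (h : R) : R -> R -> R :=
  fun t x => f (t + h) x.

(* g in H(f): g is continuous and lies in the compact-open closure of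
   {f^h : h >= 0}.  Every compact subset of R_+ x R lies in some
   [0,L] x [-L,L], so basic neighbourhoods of g are given by uniform
   closeness on such rectangles. *)
Definition in_hull (f g : R -> R -> R) : Prop :=
  cont_RpR g /\
  forall L eps, 0 < eps -> exists h, 0 <= h /\
    forall t x, 0 <= t <= L -> Rabs x <= L ->
      Rabs (shift f h t x - g t x) < eps.

Definition is_solution (g : R -> R -> R) (v : R) (y : R -> R) : Prop :=
  y 0 = v /\
  (forall t, 0 < t -> derivable_pt_lim y t (g t (y t))) /\
  (forall eps, 0 < eps -> exists delta, 0 < delta /\
     forall h, 0 < h < delta -> Rabs ((y h - y 0) / h - g 0 (y 0)) < eps).

Definition regular (f : R -> R -> R) : Prop :=
  cont_RpR f /\
  forall g, in_hull f g -> forall v,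
    (exists y, is_solution g v y) /\
    (forall y1 y2, is_solution g v y1 -> is_solution g v y2 ->
       forall t, 0 <= t -> y1 t = y2 t).

Definition asympt_periodic_decomp (tau : R) (f P Rm : R -> R -> R) : Prop :=
  cont_RpR P /\ cont_RpR Rm /\
  (forall t x, 0 <= t -> f t x = P t x + Rm t x) /\
  (forall t x, 0 <= t -> P (t + tau) x = P t x) /\
  (forall L eps, 0 < eps -> exists T, forall t x, T <= t -> Rabs x <= L ->
      Rabs (Rm t x) < eps).

(* u gives a tau-periodic solution phi(t,u,P): phi(tau,u,P) = u *)
Definition periodic_start (P : R -> R -> R) (tau u : R) : Prop :=
  exists y, is_solution P u y /\ y tau = u.

Definition periodic_solutions_isolated (P : R -> R -> R) (tau : R) : Prop :=
  forall u0, periodic_start P tau u0 ->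
    exists delta, 0 < delta /\
      forall u, u <> u0 -> Rabs (u - u0) < delta -> ~ periodic_start P tau u.

(* Main.v *)
Require Import Defs.
From Stdlib Require Import Reals Lra Lia Ranalysis5 Classical ClassicalEpsilon FunctionalExtensionality.
Open Scope R_scope.

Lemma mychoice (A B : Type) (Rel : A -> B -> Prop) : inhabited B ->
  (forall a, exists b, Rel a b) -> exists g : A -> B, forall a, Rel a (g a).
Proof.
  intros HB H. exists (fun a => epsilon HB (fun b => Rel a b)).
  intro a. apply epsilon_spec. apply H.
Qed.

Lemma Rabs_le_e (a b : R) : Rabs a <= b -> -b <= a <= b.
Proof. unfold Rabs; destruct (Rcase_abs a); intros; lra. Qed.
Lemma Rabs_lt_e (a b : R) : Rabs a < b -> -b < a < b.
Proof. unfold Rabs; destruct (Rcase_abs a); intros; lra. Qed.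
Lemma Rabs_lt_i (a b : R) : -b < a < b -> Rabs a < b.
Proof. unfold Rabs; destruct (Rcase_abs a); intros; lra. Qed.

Lemma le_eps (a b : R) : (forall eps, 0 < eps -> a <= b + eps) -> a <= b.
Proof.
  intros H. destruct (Rle_dec a b) as [h|h]; auto.
  specialize (H ((a - b)/2)). lra.
Qed.

Lemma grid (h : R) : 0 < h -> forall m : nat, forall t, 0 <= t <= INR m * h ->
  exists i : nat, (i <= m)%nat /\ INR i * h <= t <= INR i * h + h.
Proof.
  intros hp m; induction m as [|m IH]; intros t Ht.
  - exists 0%nat. simpl INR in *. rewrite Rmult_0_l in *. split; [lia|lra].
  - rewrite S_INR, Rmult_plus_distr_r, Rmult_1_l in Ht. destruct (Rle_dec t (INR m * h)) as [h1|h1].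
    + destruct (IH t) as [i [Hi Hi2]]; [lra|]. exists i; split; [lia|lra].
    + exists m. split; [lia|lra].
Qed.

Lemma arch_nat (t h : R) : 0 < h -> exists m : nat, t <= INR m * h.
Proof.
  intros hp. destruct (INR_archimed h t hp) as [n Hn]. exists n; lra.
Qed.

Lemma floor_exists (h : R) : 0 < h -> forall t, 0 <= t ->
  exists i : nat, INR i * h <= t <= INR i * h + h.
Proof.
  intros hp t Ht. destruct (arch_nat t h hp) as [m Hm].
  destruct (grid h hp m t) as [i [_ Hi]]; [lra|]. exists i; exact Hi.
Qed.

Definition infoften (S : nat -> Prop) := forall N, exists n, (N <= n)%nat /\ S n.

Lemma halving (S : nat -> Prop) (x : nat -> R) (a b : R) : infoften S ->
  (forall n, S n -> a <= x n <= b) ->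
  exists S', (forall n, S' n -> S n) /\ infoften S' /\
    ((forall n, S' n -> a <= x n <= (a+b)/2) \/ (forall n, S' n -> (a+b)/2 <= x n <= b)).
Proof.
  intros Hinf Hb.
  destruct (classic (infoften (fun n => S n /\ x n <= (a+b)/2))) as [H|H].
  - exists (fun n => S n /\ x n <= (a+b)/2). split; [tauto|]. split; [auto|].
    left. intros n [Hn Hx]. specialize (Hb n Hn). lra.
  - exists (fun n => S n /\ (a+b)/2 <= x n). split; [tauto|]. split.
    + intros N. apply not_all_ex_not in H. destruct H as [N1 HN1].
      destruct (Hinf (max N N1)) as [n [Hn1 Hn2]]. exists n. split; [lia|].
      split; auto. destruct (Rle_dec ((a+b)/2) (x n)) as [h|h]; auto.
      exfalso; apply HN1. exists n. split; [lia|]. split; auto; lra.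
    + right. intros n [Hn Hx]. specialize (Hb n Hn). lra.
Qed.

Lemma narrow (j : nat) : forall (S : nat -> Prop) (x : nat -> R) (a b : R), a <= b -> infoften S ->
  (forall n, S n -> a <= x n <= b) ->
  exists S' a', (forall n, S' n -> S n) /\ infoften S' /\
    forall n, S' n -> a' <= x n <= a' + (b - a) / 2 ^ j.
Proof.
  induction j as [|j IH]; intros S x a b Hab Hinf Hb.
  - exists S, a. split; [auto|]. split; [auto|]. intros n Hn. simpl.
    specialize (Hb n Hn). replace ((b-a)/1) with (b-a) by field. lra.
  - destruct (IH S x a b Hab Hinf Hb) as [S1 [a1 [H1 [H2 H3]]]].
    assert (hpos : 0 < 2 ^ j) by (apply pow_lt; lra).
    assert (hw : 0 <= (b - a) / 2 ^ j) by (apply Rmult_le_pos; [lra| left; apply Rinv_0_lt_compat; lra]).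
    destruct (halving S1 x a1 (a1 + (b-a)/2^j) H2 H3) as [S2 [G1 [G2 G3]]].
    assert (E : (b - a) / 2 ^ (Datatypes.S j) = ((b-a)/2^j)/2) by (simpl; field; lra).
    destruct G3 as [G3|G3].
    + exists S2, a1. split; [auto|]. split; [auto|]. intros n Hn.
      specialize (G3 n Hn). rewrite E. lra.
    + exists S2, (a1 + ((b-a)/2^j)/2). split; [auto|]. split; [auto|]. intros n Hn.
      specialize (G3 n Hn). rewrite E. lra.
Qed.

Lemma pow2_ge (j : nat) : INR j <= 2 ^ j.
Proof.
  induction j as [|j IH]; [simpl; lra|]. rewrite S_INR. change (2 ^ Datatypes.S j) with (2 * 2 ^ j).
  assert (1 <= 2 ^ j) by (apply pow_R1_Rle; lra). lra.
Qed.

Lemma close1 (S : nat -> Prop) (x : nat -> R) (M d : R) : 0 < d -> 0 <= M -> infoften S ->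
  (forall n, S n -> Rabs (x n) <= M) ->
  exists S', (forall n, S' n -> S n) /\ infoften S' /\
    forall n m, S' n -> S' m -> Rabs (x n - x m) <= d.
Proof.
  intros hd hM Hinf Hb.
  destruct (INR_archimed d (2*M) hd) as [j Hj].
  destruct (narrow j S x (-M) M ltac:(lra) Hinf) as [S1 [a1 [H1 [H2 H3]]]].
  { intros n Hn. specialize (Hb n Hn). apply Rabs_le_e in Hb; auto. }
  exists S1. split; auto. split; auto. intros n m Hn Hm.
  specialize (H3 n Hn) as A. specialize (H3 m Hm) as B.
  assert (W : (M - - M) / 2 ^ j <= d).
  { assert (hj := pow2_ge j). assert (0 < 2 ^ j) by (apply pow_lt; lra).
    apply (Rmult_le_reg_r (2^j)); auto. unfold Rdiv. rewrite Rmult_assoc, Rinv_l by lra.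
    assert (d * INR j <= d * 2 ^ j) by (apply Rmult_le_compat_l; lra). lra. }
  apply Rabs_le. lra.
Qed.

Lemma refine_pts (z : nat -> R -> R) (pts : nat -> R) (M d : R) : 0 < d -> 0 <= M ->
  forall k (S : nat -> Prop), infoften S -> (forall n i, S n -> Rabs (z n (pts i)) <= M) ->
  exists S', (forall n, S' n -> S n) /\ infoften S' /\
    forall i n m, (i <= k)%nat -> S' n -> S' m -> Rabs (z n (pts i) - z m (pts i)) <= d.
Proof.
  intros hd hM k. induction k as [|k IH]; intros S Hinf Hb.
  - destruct (close1 S (fun n => z n (pts 0%nat)) M d hd hM Hinf) as [S1 [H1 [H2 H3]]].
    { intros n Hn; apply Hb; auto. }
    exists S1. split; auto. split; auto. intros i n m Hi Hn Hm.
    assert (i = 0%nat) by lia. subst. auto.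
  - destruct (IH S Hinf Hb) as [S1 [H1 [H2 H3]]].
    destruct (close1 S1 (fun n => z n (pts (Datatypes.S k))) M d hd hM H2) as [S2 [G1 [G2 G3]]].
    { intros n Hn; apply Hb; auto. }
    exists S2. split; auto. split; auto. intros i n m Hi Hn Hm.
    destruct (Nat.eq_dec i (Datatypes.S k)) as [E|E].
    + subst. auto.
    + apply H3; auto. lia.
Qed.

Lemma diam (z : nat -> R -> R) (L K M eps : R) : 0 < L -> 0 <= K -> 0 <= M -> 0 < eps ->
  forall S, infoften S ->
  (forall n, S n -> forall t, 0 <= t <= L -> Rabs (z n t) <= M) ->
  (forall n, S n -> forall t1 t2, 0 <= t1 <= L -> 0 <= t2 <= L ->
      Rabs (z n t1 - z n t2) <= K * Rabs (t1 - t2)) ->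
  exists S', (forall n, S' n -> S n) /\ infoften S' /\
    forall n m t, S' n -> S' m -> 0 <= t <= L -> Rabs (z n t - z m t) <= eps.
Proof.
  intros hL hK hM he S Hinf Hb Hlip.
  set (h := eps / (3 * (K + 1))).
  assert (hh : 0 < h) by (unfold h; apply Rdiv_lt_0_compat; lra).
  assert (hKh : K * h <= eps / 3).
  { unfold h. replace (K * (eps / (3 * (K + 1)))) with ((eps/3) * (K / (K+1))) by (field; lra).
    assert (K / (K+1) <= 1).
    { replace (K/(K+1)) with (1 - 1/(K+1)) by (field; lra).
      assert (0 < 1/(K+1)) by (apply Rdiv_lt_0_compat; lra). lra. }
    assert (0 <= K/(K+1)) by (apply Rmult_le_pos; [lra|left; apply Rinv_0_lt_compat; lra]).
    assert ((eps/3) * (K/(K+1)) <= (eps/3) * 1) by (apply Rmult_le_compat_l; lra). lra. }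
  destruct (arch_nat L h hh) as [k Hk].
  set (pts := fun i : nat => Rmin (INR i * h) L).
  assert (Hpts : forall i, 0 <= pts i <= L).
  { intro i. unfold pts. assert (0 <= INR i * h) by (apply Rmult_le_pos; [apply pos_INR|lra]).
    unfold Rmin; destruct (Rle_dec (INR i * h) L); lra. }
  destruct (refine_pts z pts M (eps/3) ltac:(lra) hM k S Hinf) as [S1 [H1 [H2 H3]]].
  { intros n i Hn. apply Hb; auto. }
  exists S1. split; auto. split; auto. intros n m t Hn Hm Ht.
  destruct (grid h hh k t ltac:(lra)) as [i [Hi Hti]].
  assert (Ep : pts i = INR i * h) by (unfold pts; apply Rmin_left; lra).
  assert (Hd : Rabs (t - pts i) <= h) by (rewrite Ep; apply Rabs_le; lra).
  assert (A : Rabs (z n t - z n (pts i)) <= eps/3).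
  { eapply Rle_trans; [apply Hlip; auto|].
    eapply Rle_trans; [apply Rmult_le_compat_l; [lra|exact Hd]|lra]. }
  assert (B : Rabs (z m t - z m (pts i)) <= eps/3).
  { eapply Rle_trans; [apply Hlip; auto|].
    eapply Rle_trans; [apply Rmult_le_compat_l; [lra|exact Hd]|lra]. }
  assert (C := H3 i n m Hi Hn Hm).
  apply Rabs_le_e in A; apply Rabs_le_e in B; apply Rabs_le_e in C. apply Rabs_le. lra.
Qed.

Definition refine_set (z : nat -> R -> R) (L : R) (S0 S : nat -> Prop) (e : R) : nat -> Prop :=
  epsilon (inhabits S) (fun S' => (forall n, S' n -> S n) /\
     ((infoften S /\ (forall n, S n -> S0 n)) -> infoften S' /\
        forall n m t, S' n -> S' m -> 0 <= t <= L -> Rabs (z n t - z m t) <= e)).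

Fixpoint Sk (z : nat -> R -> R) (L : R) (S0 : nat -> Prop) (j : nat) : nat -> Prop :=
  match j with
  | O => S0
  | Datatypes.S j' => refine_set z L S0 (Sk z L S0 j') (/ INR j)
  end.

Definition pick (Q : nat -> Prop) : nat := epsilon (inhabits 0%nat) Q.

Lemma pick_spec (Q : nat -> Prop) : infoften Q -> Q (pick Q).
Proof. intros H. unfold pick. apply epsilon_spec. destruct (H 0%nat) as [n [_ Hn]]. eauto. Qed.

Lemma cluster (z : nat -> R -> R) (L K M : R) : 0 < L -> 0 <= K -> 0 <= M ->
  forall S0, infoften S0 ->
  (forall n, S0 n -> forall t, 0 <= t <= L -> Rabs (z n t) <= M) ->
  (forall n, S0 n -> forall t1 t2, 0 <= t1 <= L -> 0 <= t2 <= L ->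
      Rabs (z n t1 - z n t2) <= K * Rabs (t1 - t2)) ->
  exists w : R -> R, forall eps, 0 < eps -> forall N, exists n, (N <= n)%nat /\ S0 n /\
      forall t, 0 <= t <= L -> Rabs (z n t - w t) <= eps.
Proof.
  intros hL hK hM S0 Hinf Hb Hlip.
  assert (Hstep : forall j, infoften (Sk z L S0 j) /\ (forall n, Sk z L S0 j n -> S0 n) ->
     (forall n, Sk z L S0 (Datatypes.S j) n -> Sk z L S0 j n) /\
     infoften (Sk z L S0 (Datatypes.S j)) /\
     forall n m t, Sk z L S0 (Datatypes.S j) n -> Sk z L S0 (Datatypes.S j) m -> 0 <= t <= L ->
        Rabs (z n t - z m t) <= / INR (Datatypes.S j)).
  { intros j [Hi Hs]. simpl Sk at 1 2 3 4. unfold refine_set.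
    match goal with |- context [epsilon ?i ?p] => assert (E : p (epsilon i p)) end.
    { apply epsilon_spec.
      assert (hpos : 0 < / INR (Datatypes.S j)) by (apply Rinv_0_lt_compat, lt_0_INR; lia).
      destruct (diam z L K M (/ INR (Datatypes.S j)) hL hK hM hpos _ Hi) as [S' [A [B C]]].
      { intros n Hn; apply Hb; auto. }
      { intros n Hn; apply Hlip; auto. }
      exists S'. split; auto. }
    destruct E as [E1 E2]. destruct (E2 (conj Hi Hs)) as [E3 E4].
    split; auto. }
  assert (Hall : forall j, infoften (Sk z L S0 j) /\ (forall n, Sk z L S0 j n -> S0 n)).
  { induction j as [|j IH]. - simpl. split; auto.
    - destruct (Hstep j IH) as [A [B _]]. split; auto. intros n Hn. apply IH. auto. }
  assert (Hnest : forall j j' n, (j <= j')%nat -> Sk z L S0 j' n -> Sk z L S0 j n).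
  { intros j j' n Hjj'. induction Hjj' as [|j' Hle IH]; auto.
    intros Hn. apply IH. destruct (Hstep j' (Hall j')) as [A _]. auto. }
  assert (Hdiam : forall j n m t, Sk z L S0 (Datatypes.S j) n -> Sk z L S0 (Datatypes.S j) m -> 0 <= t <= L ->
        Rabs (z n t - z m t) <= / INR (Datatypes.S j)).
  { intros j. destruct (Hstep j (Hall j)) as [_ [_ C]]. exact C. }
  set (U := fun t j => z (pick (Sk z L S0 j)) t).
  assert (HU : forall j, Sk z L S0 j (pick (Sk z L S0 j))) by (intro j; apply pick_spec, Hall).
  set (w := fun t => epsilon (inhabits 0) (fun l => Un_cv (U t) l)).
  assert (Hw : forall t, 0 <= t <= L -> Un_cv (U t) (w t)).
  { intros t Ht. unfold w. apply epsilon_spec.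
    destruct (R_complete (U t)) as [l Hl]; [|exists l; exact Hl].
    intros eps heps. destruct (INR_archimed eps 1 heps) as [N HN].
    destruct N as [|N']; [simpl in HN; lra|].
    exists (Datatypes.S N'). intros n m Hn Hm. unfold R_dist, U.
    eapply Rle_lt_trans; [apply (Hdiam N'); auto|].
    - apply (Hnest _ n); [lia|auto].
    - apply (Hnest _ m); [lia|auto].
    - apply (Rmult_lt_reg_l (INR (Datatypes.S N'))); [apply lt_0_INR; lia|].
      rewrite Rinv_r; [lra|]. apply not_0_INR; lia. }
  assert (Key : forall J n t, Sk z L S0 (Datatypes.S J) n -> 0 <= t <= L ->
     Rabs (z n t - w t) <= 2 / INR (Datatypes.S J)).
  { intros J n t Hn Ht. assert (hpos : 0 < / INR (Datatypes.S J)) by (apply Rinv_0_lt_compat, lt_0_INR; lia).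
    destruct (Hw t Ht _ hpos) as [N1 HN1]. specialize (HN1 (max N1 (Datatypes.S J)) ltac:(lia)).
    unfold R_dist, U in HN1.
    assert (A := Hdiam J n (pick (Sk z L S0 (max N1 (Datatypes.S J)))) t Hn
        ltac:(apply (Hnest _ (max N1 (Datatypes.S J))); [lia|apply HU]) Ht).
    apply Rabs_lt_e in HN1. apply Rabs_le_e in A. apply Rabs_le.
    unfold Rdiv. lra. }
  exists w. intros eps heps N.
  destruct (INR_archimed eps 2 heps) as [J HJ].
  destruct (proj1 (Hall (Datatypes.S J)) N) as [n [Hn1 Hn2]].
  exists n. split; auto. split; [apply (proj2 (Hall (Datatypes.S J))); auto|].
  intros t Ht. eapply Rle_trans; [apply (Key J); auto|].
  rewrite S_INR.
  assert (0 < INR J) by (destruct J; [simpl in HJ; lra| apply lt_0_INR; lia]).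
  apply (Rmult_le_reg_r (INR J + 1)); [lra|]. unfold Rdiv. rewrite Rmult_assoc, Rinv_l by lra. nra.
Qed.

Lemma sol_rcont g v u : is_solution g v u -> forall eps, 0 < eps ->
  exists delta, 0 < delta /\ forall h, 0 < h < delta -> Rabs (u h - u 0) < eps.
Proof.
  intros [H0 [Hd Hr]] eps he. destruct (Hr 1 ltac:(lra)) as [d1 [hd1 Hd1]].
  set (c := Rabs (g 0 (u 0)) + 1).
  assert (hc : 0 < c) by (unfold c; pose proof (Rabs_pos (g 0 (u 0))); lra).
  exists (Rmin d1 (eps / c)). split.
  { apply Rmin_pos; auto. apply Rdiv_lt_0_compat; auto. }
  intros h [hh1 hh2]. assert (h < d1) by (eapply Rlt_le_trans; [exact hh2| apply Rmin_l]).
  assert (h < eps / c) by (eapply Rlt_le_trans; [exact hh2| apply Rmin_r]).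
  specialize (Hd1 h (conj hh1 H)).
  set (q := (u h - u 0) / h) in *.
  assert (Eq : u h - u 0 = h * q) by (unfold q; field; lra).
  rewrite Eq, Rabs_mult, (Rabs_right h) by lra.
  assert (Rabs q < c).
  { unfold c. pose proof (Rabs_triang (q - g 0 (u 0)) (g 0 (u 0))) as T.
    replace (q - g 0 (u 0) + g 0 (u 0)) with q in T by ring. lra. }
  assert (h * c < eps).
  { apply (Rmult_lt_reg_r (/ c)); [apply Rinv_0_lt_compat; lra|].
    rewrite Rmult_assoc, Rinv_r by lra. lra. }
  assert (h * Rabs q <= h * c) by (apply Rmult_le_compat_l; lra). lra.
Qed.

Lemma sol_contpt g v u t : is_solution g v u -> 0 < t -> continuity_pt u t.
Proof.
  intros [_ [Hd _]] ht. apply derivable_continuous_pt. exists (g t (u t)). apply Hd; auto.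
Qed.

Lemma dlim_shift (u : R -> R) s t1 l : derivable_pt_lim u (s + t1) l ->
  derivable_pt_lim (fun s => u (s + t1)) s l.
Proof.
  unfold derivable_pt_lim. intros H eps he. destruct (H eps he) as [d Hd]. exists d.
  intros h hn hh. replace (s + h + t1) with (s + t1 + h) by ring. auto.
Qed.

Lemma sol_shift g v u t1 : is_solution g v u -> 0 < t1 ->
  is_solution (shift g t1) (u t1) (fun s => u (s + t1)).
Proof.
  intros [H0 [Hd Hr]] ht1. split; [|split].
  - rewrite Rplus_0_l; auto.
  - intros t ht. unfold shift. apply dlim_shift. apply Hd. lra.
  - intros eps he. destruct (Hd t1 ht1 eps he) as [d Hd1]. exists d. split; [apply cond_pos|].
    intros h [hh1 hh2]. unfold shift. rewrite !Rplus_0_l.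
    replace (h + t1) with (t1 + h) by ring. apply Hd1; [lra|].
    rewrite Rabs_right; lra.
Qed.

Lemma sol_ext g1 g2 v u : (forall t x, 0 <= t -> g1 t x = g2 t x) ->
  is_solution g1 v u -> is_solution g2 v u.
Proof.
  intros E [H0 [Hd Hr]]. split; [auto|split].
  - intros t ht. rewrite <- E by lra. auto.
  - intros eps he. destruct (Hr eps he) as [d [hd Hd1]]. exists d. split; auto.
    intros h hh. rewrite <- E by lra. auto.
Qed.

Lemma dlim_local (u1 u2 : R -> R) t l d : 0 < d ->
  (forall s, Rabs (s - t) < d -> u1 s = u2 s) ->
  derivable_pt_lim u1 t l -> derivable_pt_lim u2 t l.
Proof.
  intros hd E H eps he. destruct (H eps he) as [d1 Hd1].
  assert (hm : 0 < Rmin d d1) by (apply Rmin_pos; auto; apply cond_pos).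
  exists (mkposreal _ hm). intros h hn hh. simpl in hh.
  assert (Rabs h < d) by (eapply Rlt_le_trans; [exact hh|apply Rmin_l]).
  assert (Rabs h < d1) by (eapply Rlt_le_trans; [exact hh|apply Rmin_r]).
  rewrite <- !E. apply Hd1; auto.
  - replace (t - t) with 0 by ring. rewrite Rabs_R0; auto.
  - replace (t + h - t) with h by ring; auto.
Qed.

Lemma mvt2 (u u' : R -> R) a b : a <> b ->
  (forall c, Rmin a b <= c <= Rmax a b -> derivable_pt_lim u c (u' c)) ->
  exists c, Rmin a b <= c <= Rmax a b /\ u b - u a = u' c * (b - a).
Proof.
  intros hab Hd. destruct (Rlt_dec a b) as [h|h].
  - rewrite Rmin_left, Rmax_right in Hd by lra.
    destruct (MVT_cor2 u u' a b h Hd) as [c [E Hc]]. exists c.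
    rewrite Rmin_left, Rmax_right by lra. split; [lra|auto].
  - assert (b < a) by lra. rewrite Rmin_right, Rmax_left in Hd by lra.
    destruct (MVT_cor2 u u' b a H Hd) as [c [E Hc]]. exists c.
    rewrite Rmin_right, Rmax_left by lra. split; [lra|]. replace (u b - u a) with (-(u a - u b)) by ring.
    rewrite E. ring.
Qed.

Lemma Rabs_div_le (a h e : R) : h <> 0 -> Rabs a <= e * Rabs h -> Rabs (a / h) <= e.
Proof.
  intros hh H. unfold Rdiv. rewrite Rabs_mult, Rabs_inv.
  assert (0 < Rabs h) by (apply Rabs_pos_lt; auto).
  apply (Rmult_le_reg_r (Rabs h)); auto. rewrite Rmult_assoc, Rinv_l by lra. lra.
Qed.

Lemma minmax_dist a b c : Rmin a b <= c <= Rmax a b -> Rabs (c - a) <= Rabs (b - a).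
Proof.
  unfold Rmin, Rmax. destruct (Rle_dec a b); intros [h1 h2];
  unfold Rabs; destruct (Rcase_abs (c - a)); destruct (Rcase_abs (b - a)); lra.
Qed.

Section Main.
Variables (tau : R) (f P Rm : R -> R -> R).
Hypothesis Htau : 0 < tau.
Hypothesis Hreg : regular f.
Hypothesis Hdec : asympt_periodic_decomp tau f P Rm.

Lemma P_per_n : forall n t x, 0 <= t -> P (t + INR n * tau) x = P t x.
Proof.
  destruct Hdec as [_ [_ [_ [Hp _]]]].
  induction n as [|n IH]; intros t x ht.
  - simpl. rewrite Rmult_0_l, Rplus_0_r. auto.
  - rewrite S_INR. replace (t + (INR n + 1) * tau) with ((t + INR n * tau) + tau) by ring.
    rewrite Hp; [apply IH; auto|]. assert (0 <= INR n * tau) by (apply Rmult_le_pos; [apply pos_INR|lra]). lra.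
Qed.

Lemma P_per1 : forall t x, 0 <= t -> P (t + tau) x = P t x.
Proof. destruct Hdec as [_ [_ [_ [Hp _]]]]. auto. Qed.

Lemma hull_shiftP : forall s, 0 <= s -> in_hull f (shift P s).
Proof.
  intros s hs. destruct Hdec as [HcP [_ [Hf [_ HR]]]]. split.
  - intros t x ht eps he. destruct (HcP (t + s) x ltac:(lra) eps he) as [d [hd Hd]].
    exists d. split; auto. intros t' x' ht' h1 h2. unfold shift. apply Hd; auto; [lra|].
    replace (t' + s - (t + s)) with (t' - t) by ring. auto.
  - intros L eps he. destruct (HR L eps he) as [T HT].
    destruct (arch_nat T tau Htau) as [n Hn].
    exists (s + INR n * tau). split.
    { assert (0 <= INR n * tau) by (apply Rmult_le_pos; [apply pos_INR|lra]). lra. }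
    intros t x ht hx. unfold shift.
    rewrite Hf by (assert (0 <= INR n * tau) by (apply Rmult_le_pos; [apply pos_INR|lra]); lra).
    replace (t + (s + INR n * tau)) with ((t + s) + INR n * tau) by ring.
    rewrite P_per_n by lra. replace (P (t + s) x + Rm (t + s + INR n * tau) x - P (t + s) x)
      with (Rm (t + s + INR n * tau) x) by ring. apply HT; auto. lra.
Qed.

Lemma shiftP0 : shift P 0 = P.
Proof. apply functional_extensionality; intro t. apply functional_extensionality; intro x.
  unfold shift. rewrite Rplus_0_r. auto. Qed.

Lemma hullP : in_hull f P.
Proof. rewrite <- shiftP0. apply hull_shiftP. lra. Qed.

Lemma uniq_shiftP : forall s, 0 <= s -> forall v y1 y2,
  is_solution (shift P s) v y1 -> is_solution (shift P s) v y2 -> forall t, 0 <= t -> y1 t = y2 t.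
Proof.
  intros s hs v. destruct Hreg as [_ Hr]. apply (proj2 (Hr _ (hull_shiftP s hs) v)).
Qed.

Lemma uniqP : forall v y1 y2, is_solution P v y1 -> is_solution P v y2 -> forall t, 0 <= t -> y1 t = y2 t.
Proof. intros v y1 y2. rewrite <- shiftP0. apply uniq_shiftP. lra. Qed.

Definition phi (v : R) : R -> R := epsilon (inhabits (fun _ : R => 0)) (fun u => is_solution P v u).

Lemma phi_sol : forall v, is_solution P v (phi v).
Proof.
  intro v. unfold phi. apply epsilon_spec. destruct Hreg as [_ Hr].
  apply (proj1 (Hr _ hullP v)).
Qed.

Lemma noncross : forall v1 v2 u1 u2, is_solution P v1 u1 -> is_solution P v2 u2 -> v1 <= v2 ->
  forall t, 0 <= t -> u1 t <= u2 t.
Proof.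
  intros v1 v2 u1 u2 H1 H2 hv t ht.
  destruct (Rle_dec (u1 t) (u2 t)) as [h|h]; auto. exfalso.
  destruct (Req_dec v1 v2) as [E|E].
  { subst. rewrite (uniqP v2 u1 u2 H1 H2 t ht) in h. lra. }
  assert (hv' : v1 < v2) by lra.
  assert (htp : 0 < t).
  { destruct ht as [ht|ht]; auto. subst. destruct H1 as [A _]; destruct H2 as [B _]. rewrite A, B in h. lra. }
  destruct (sol_rcont _ _ _ H1 ((v2 - v1)/3) ltac:(lra)) as [d1 [hd1 Hd1]].
  destruct (sol_rcont _ _ _ H2 ((v2 - v1)/3) ltac:(lra)) as [d2 [hd2 Hd2]].
  set (a := Rmin (Rmin d1 d2) t / 2).
  assert (ha : 0 < a /\ a < d1 /\ a < d2 /\ a < t).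
  { unfold a. assert (0 < Rmin (Rmin d1 d2) t) by (repeat apply Rmin_pos; auto).
    pose proof (Rmin_l (Rmin d1 d2) t). pose proof (Rmin_r (Rmin d1 d2) t).
    pose proof (Rmin_l d1 d2). pose proof (Rmin_r d1 d2). lra. }
  assert (A1 := Hd1 a ltac:(lra)). assert (A2 := Hd2 a ltac:(lra)).
  destruct H1 as [E1 R1]; destruct H2 as [E2 R2]. rewrite E1 in A1; rewrite E2 in A2.
  apply Rabs_lt_e in A1; apply Rabs_lt_e in A2.
  destruct (IVT_interv (fun s => u1 s - u2 s) a t) as [z [Hz Hz0]].
  { intros s hs. apply continuity_pt_minus; [apply (sol_contpt P v1 u1 s (conj E1 R1)) | apply (sol_contpt P v2 u2 s (conj E2 R2))]; lra. }
  { lra. } { lra. } { lra. }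
  assert (hz : 0 < z) by lra.
  assert (S1 := sol_shift _ _ _ z (conj E1 R1) hz).
  assert (S2 := sol_shift _ _ _ z (conj E2 R2) hz).
  replace (u2 z) with (u1 z) in S2 by lra.
  assert (U := uniq_shiftP z ltac:(lra) _ _ _ S1 S2 (t - z) ltac:(lra)).
  simpl in U. replace (t - z + z) with t in U by ring. lra.
Qed.


Lemma P_bounded_rect : forall M, 0 <= M -> exists B, forall t x, 0 <= t <= tau -> Rabs x <= M -> Rabs (P t x) <= B.
Proof.
  intros M hM. destruct Hdec as [HcP _].
  apply NNPP. intro Hn.
  assert (Hs : forall n : nat, exists p : R * R, 0 <= fst p <= tau /\ Rabs (snd p) <= M /\ INR n < Rabs (P (fst p) (snd p))).
  { intro n. apply NNPP. intro Hn2. apply Hn. exists (INR n). intros t x ht hx.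
    apply Rnot_lt_le. intro hl. apply Hn2. exists (t, x). simpl. auto. }
  destruct (mychoice _ _ _ (inhabits (0,0)) Hs) as [g Hg].
  set (z := fun (n : nat) (s : R) => fst (g n) + s * (snd (g n) - fst (g n))).
  destruct (cluster z 1 (tau + M) (tau + M) ltac:(lra) ltac:(lra) ltac:(lra) (fun _ => True)) as [w Hw].
  { intro N. exists N. split; auto. }
  { intros n _ s hs. destruct (Hg n) as [A [B _]]. apply Rabs_le_e in B. unfold z. apply Rabs_le.
    split; nra. }
  { intros n _ t1 t2 _ _. destruct (Hg n) as [A [B _]]. apply Rabs_le_e in B. unfold z.
    replace (fst (g n) + t1 * (snd (g n) - fst (g n)) - (fst (g n) + t2 * (snd (g n) - fst (g n))))
      with ((t1 - t2) * (snd (g n) - fst (g n))) by ring.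
    rewrite Rabs_mult, Rmult_comm. apply Rmult_le_compat_r; [apply Rabs_pos|].
    apply Rabs_le. lra. }
  assert (Hz0 : forall n, z n 0 = fst (g n)) by (intro n; unfold z; ring).
  assert (Hz1 : forall n, z n 1 = snd (g n)) by (intro n; unfold z; ring).
  assert (Hc0 : 0 <= w 0).
  { apply Rle_trans with (0 + 0); [lra|]. apply le_eps. intros e he.
    destruct (Hw e he 0%nat) as [n [_ [_ Hn1]]]. specialize (Hn1 0 ltac:(lra)).
    rewrite Hz0 in Hn1. apply Rabs_le_e in Hn1. destruct (Hg n) as [A _]. lra. }
  destruct (HcP (w 0) (w 1) Hc0 1 ltac:(lra)) as [d [hd Hd]].
  destruct (INR_archimed 1 (Rabs (P (w 0) (w 1)) + 1) ltac:(lra)) as [N HN].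
  destruct (Hw (d/2) ltac:(lra) N) as [n [HnN [_ Hcl]]].
  assert (A0 := Hcl 0 ltac:(lra)). assert (A1 := Hcl 1 ltac:(lra)).
  rewrite Hz0 in A0. rewrite Hz1 in A1.
  destruct (Hg n) as [G1 [G2 G3]].
  assert (Hlt := Hd (fst (g n)) (snd (g n)) ltac:(lra) ltac:(apply Rabs_le_e in A0; apply Rabs_lt_i; lra)
     ltac:(apply Rabs_le_e in A1; apply Rabs_lt_i; lra)).
  assert (INR N <= INR n) by (apply le_INR; auto).
  pose proof (Rabs_triang_inv (P (fst (g n)) (snd (g n))) (P (w 0) (w 1))). lra.
Qed.

Lemma P_bounded : forall M, 0 <= M -> exists B, forall t x, 0 <= t -> Rabs x <= M -> Rabs (P t x) <= B.
Proof.
  intros M hM. destruct (P_bounded_rect M hM) as [B HB]. exists B. intros t x ht hx.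
  destruct (floor_exists tau Htau t ht) as [i Hi].
  replace t with ((t - INR i * tau) + INR i * tau) by ring. rewrite P_per_n by lra.
  apply HB; auto. lra.
Qed.


Definition Dprop (w : R -> R) (L : R) := forall t, 0 <= t <= L -> forall eps, 0 < eps ->
  exists delta, 0 < delta /\ forall h, h <> 0 -> 0 <= t + h <= L -> Rabs h < delta ->
    Rabs ((w (t + h) - w t) / h - P t (w t)) < eps.

Lemma D_dlim : forall w L t, Dprop w L -> 0 < t < L -> derivable_pt_lim w t (P t (w t)).
Proof.
  intros w L t HD ht eps he. destruct (HD t ltac:(lra) eps he) as [d [hd Hd]].
  assert (hm : 0 < Rmin d (Rmin t (L - t))) by (repeat apply Rmin_pos; lra).
  exists (mkposreal _ hm). intros h hn hh. simpl in hh.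
  pose proof (Rmin_l d (Rmin t (L - t))). pose proof (Rmin_r d (Rmin t (L - t))).
  pose proof (Rmin_l t (L - t)). pose proof (Rmin_r t (L - t)).
  apply Rabs_lt_e in hh as hh'. apply Hd; auto; lra.
Qed.

Lemma glue : forall w L, Dprop w L -> tau < L -> forall t, 0 <= t <= tau -> w t = phi (w 0) t.
Proof.
  intros w L HD hL.
  set (psi := phi (w tau)).
  assert (Hpsi := phi_sol (w tau)). fold psi in Hpsi.
  destruct Hpsi as [Hp0 [Hpd Hpr]].
  set (wh := fun t => if Rle_dec t tau then w t else psi (t - tau)).
  assert (Hwh1 : forall t, t <= tau -> wh t = w t).
  { intros t ht. unfold wh. destruct (Rle_dec t tau); [auto|lra]. }
  assert (Hwh2 : forall t, tau < t -> wh t = psi (t - tau)).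
  { intros t ht. unfold wh. destruct (Rle_dec t tau); [lra|auto]. }
  assert (Hsol : is_solution P (w 0) wh).
  { split; [|split].
    - apply Hwh1. lra.
    - intros t ht. destruct (Rlt_dec t tau) as [h1|h1].
      + rewrite (Hwh1 t) by lra. apply (dlim_local w wh t _ (Rmin t (tau - t))).
        * apply Rmin_pos; lra.
        * intros s hs. pose proof (Rmin_r t (tau - t)). apply Rabs_lt_e in hs. rewrite Hwh1; auto. lra.
        * apply (D_dlim w L); auto. lra.
      + destruct (Req_dec t tau) as [E|E].
        * subst t. rewrite (Hwh1 tau) by lra. intros eps he.
          destruct (HD tau ltac:(lra) eps he) as [d1 [hd1 Hd1]].
          destruct (Hpr eps he) as [d2 [hd2 Hd2]].
          assert (hm : 0 < Rmin (Rmin d1 d2) tau) by (repeat apply Rmin_pos; lra).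
          exists (mkposreal _ hm). intros h hn hh. simpl in hh. rewrite (Hwh1 tau) by lra.
          pose proof (Rmin_l (Rmin d1 d2) tau). pose proof (Rmin_r (Rmin d1 d2) tau).
          pose proof (Rmin_l d1 d2). pose proof (Rmin_r d1 d2).
          apply Rabs_lt_e in hh as hh'.
          destruct (Rlt_dec h 0) as [hneg|hpos].
          -- rewrite (Hwh1 (tau + h)) by lra. apply Hd1; auto; lra.
          -- rewrite (Hwh2 (tau + h)) by lra. replace (tau + h - tau) with h by ring.
             rewrite <- Hp0. replace (P tau (psi 0)) with (P 0 (psi 0)).
             ++ apply Hd2. lra.
             ++ rewrite <- (P_per1 0 (psi 0)) by lra. rewrite Rplus_0_l. auto.
        * assert (htt : tau < t) by lra. rewrite (Hwh2 t htt).
          apply (dlim_local (fun s => psi (s - tau)) wh t _ (t - tau)); [lra| |].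
          -- intros s hs. apply Rabs_lt_e in hs. rewrite Hwh2; auto. lra.
          -- replace (P t (psi (t - tau))) with (P (t - tau) (psi (t - tau))).
             ++ change (fun s => psi (s - tau)) with (fun s => psi (s + - tau)).
                apply dlim_shift. apply Hpd. lra.
             ++ rewrite <- (P_per1 (t - tau)) by lra. replace (t - tau + tau) with t by ring. auto.
    - intros eps he. destruct (HD 0 ltac:(lra) eps he) as [d [hd Hd]].
      exists (Rmin d tau). split; [apply Rmin_pos; lra|].
      intros h [hh1 hh2]. pose proof (Rmin_l d tau). pose proof (Rmin_r d tau).
      rewrite !Hwh1 by lra. replace h with (0 + h) at 1 by ring. apply Hd; try lra.
      rewrite Rabs_right; lra. }
  intros t ht. rewrite <- (Hwh1 t) by lra. apply (uniqP (w 0)); auto. apply phi_sol. lra.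
Qed.

Variables (u0 : R) (y : R -> R) (M : R).
Hypothesis Hy : is_solution f u0 y.
Hypothesis HM : forall t, 0 <= t -> Rabs (y t) <= M.

Lemma M_pos : 0 <= M.
Proof. pose proof (HM 0 ltac:(lra)). pose proof (Rabs_pos (y 0)). lra. Qed.

Lemma consts : exists K N0, 0 <= K /\ (1 <= N0)%nat /\ forall n, (N0 <= n)%nat -> forall t, 0 <= t ->
  Rabs (f (t + INR n * tau) (y (t + INR n * tau))) <= K.
Proof.
  destruct (P_bounded M M_pos) as [B HB]. destruct Hdec as [_ [_ [Hf [_ HR]]]].
  destruct (HR M 1 ltac:(lra)) as [T HT]. destruct (arch_nat T tau Htau) as [N HN].
  assert (hB : 0 <= B).
  { pose proof (HB 0 0 ltac:(lra) ltac:(rewrite Rabs_R0; apply M_pos)). pose proof (Rabs_pos (P 0 0)). lra. }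
  exists (B + 1), (Datatypes.S N). split; [lra|]. split; [lia|].
  intros n hn t ht. assert (INR N <= INR n) by (apply le_INR; lia).
  assert (INR N * tau <= INR n * tau) by (apply Rmult_le_compat_r; lra).
  assert (0 <= INR N * tau) by (apply Rmult_le_pos; [apply pos_INR|lra]).
  rewrite Hf by lra. rewrite P_per_n by lra.
  pose proof (Rabs_triang (P t (y (t + INR n * tau))) (Rm (t + INR n * tau) (y (t + INR n * tau)))).
  assert (Rabs (P t (y (t + INR n * tau))) <= B) by (apply HB; auto; apply HM; lra).
  assert (Rabs (Rm (t + INR n * tau) (y (t + INR n * tau))) < 1) by (apply HT; [lra|apply HM; lra]).
  lra.
Qed.

Definition z (n : nat) (t : R) := y (t + INR n * tau).

Lemma z_deriv : forall n, (1 <= n)%nat -> forall t, 0 <= t ->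
  derivable_pt_lim (z n) t (f (t + INR n * tau) (y (t + INR n * tau))).
Proof.
  intros n hn t ht. unfold z. apply dlim_shift. destruct Hy as [_ [Hd _]]. apply Hd.
  assert (1 <= INR n) by (change 1 with (INR 1); apply le_INR; auto).
  assert (tau <= INR n * tau) by nra. lra.
Qed.

Lemma z_lip : forall K N0, 0 <= K -> (1 <= N0)%nat -> (forall n, (N0 <= n)%nat -> forall t, 0 <= t ->
  Rabs (f (t + INR n * tau) (y (t + INR n * tau))) <= K) ->
  forall n, (N0 <= n)%nat -> forall t1 t2, 0 <= t1 -> 0 <= t2 -> Rabs (z n t1 - z n t2) <= K * Rabs (t1 - t2).
Proof.
  intros K N0 hK hN0 HK n hn t1 t2 h1 h2.
  destruct (Req_dec t1 t2) as [E|E].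
  { subst. replace (z n t2 - z n t2) with 0 by ring. replace (t2 - t2) with 0 by ring. rewrite Rabs_R0. lra. }
  destruct (mvt2 (z n) (fun c => f (c + INR n * tau) (y (c + INR n * tau))) t2 t1) as [c [Hc Ec]].
  { auto. }
  { intros c hc. apply z_deriv; [lia|]. unfold Rmin, Rmax in hc. destruct (Rle_dec t2 t1); lra. }
  rewrite Ec, Rabs_mult. apply Rmult_le_compat_r; [apply Rabs_pos|]. apply HK; auto.
  unfold Rmin, Rmax in Hc. destruct (Rle_dec t2 t1); lra.
Qed.

Lemma cluster_D : forall L w, 0 < L ->
  (forall eps, 0 < eps -> forall N, exists n, (N <= n)%nat /\ forall t, 0 <= t <= L -> Rabs (z n t - w t) <= eps) ->
  Dprop w L.
Proof.
  intros L w hL Hcl t ht eps he.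
  destruct Hdec as [HcP [_ [Hf [_ HR]]]].
  destruct (HcP t (w t) ltac:(lra) (eps/3) ltac:(lra)) as [d1 [hd1 Hd1]].
  destruct consts as [K [N0 [hK [hN0 HK]]]].
  destruct (HR M (eps/3) ltac:(lra)) as [T1 HT1]. destruct (arch_nat T1 tau Htau) as [N1 HN1].
  exists (d1 / (2 * (K + 1))). split; [apply Rdiv_lt_0_compat; lra|].
  intros h hn hth hh.
  assert (hKh : K * Rabs h <= d1 / 2).
  { assert (Rabs h * (2 * (K+1)) < d1).
    { apply (Rmult_lt_reg_r (/ (2 * (K+1)))); [apply Rinv_0_lt_compat; lra|].
      rewrite Rmult_assoc, Rinv_r by lra. lra. }
    pose proof (Rabs_pos h). nra. }
  assert (hd1h : Rabs h < d1).
  { assert (d1 / (2 * (K + 1)) <= d1).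
    { unfold Rdiv. assert (/ (2 * (K+1)) <= 1).
      { rewrite <- Rinv_1. apply Rinv_le_contravar; lra. }
      nra. }
    lra. }
  assert (hah : 0 < Rabs h) by (apply Rabs_pos_lt; auto).
  set (eta := Rmin (d1/4) (eps * Rabs h / 6)).
  assert (heta : 0 < eta) by (apply Rmin_pos; [lra| apply Rdiv_lt_0_compat; [nra|lra]]).
  assert (heta1 : eta <= d1/4) by apply Rmin_l.
  assert (heta2 : eta <= eps * Rabs h / 6) by apply Rmin_r.
  destruct (Hcl eta heta (max N0 N1)) as [n [hn' Hn]].
  destruct (mvt2 (z n) (fun c => f (c + INR n * tau) (y (c + INR n * tau))) t (t + h)) as [c [Hc Ec]].
  { intro E. apply hn. lra. }
  { intros c hc. apply z_deriv; [lia|]. unfold Rmin, Rmax in hc. destruct (Rle_dec t (t+h)); lra. }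
  assert (hcL : 0 <= c <= L) by (unfold Rmin, Rmax in Hc; destruct (Rle_dec t (t+h)); lra).
  assert (hct : Rabs (c - t) <= Rabs h).
  { pose proof (minmax_dist _ _ _ Hc). replace (t + h - t) with h in H by ring. auto. }
  assert (hnN1 : INR N1 * tau <= INR n * tau) by (apply Rmult_le_compat_r; [lra|apply le_INR; lia]).
  assert (hN1p : 0 <= INR N1 * tau) by (apply Rmult_le_pos; [apply pos_INR|lra]).
  rewrite Hf in Ec by lra. rewrite P_per_n in Ec by lra.
  fold (z n c) in Ec.
  assert (Hzc : Rabs (z n c - w t) < d1).
  { assert (A := z_lip K N0 hK hN0 HK n ltac:(lia) c t ltac:(lra) ltac:(lra)).
    assert (B := Hn t ht).
    assert (K * Rabs (c - t) <= K * Rabs h) by (apply Rmult_le_compat_l; auto).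
    apply Rabs_le_e in A. apply Rabs_le_e in B. apply Rabs_lt_i. lra. }
  assert (HP1 : Rabs (P c (z n c) - P t (w t)) < eps / 3).
  { apply Hd1; auto; [lra|]. lra. }
  assert (HR1 : Rabs (Rm (c + INR n * tau) (z n c)) < eps / 3).
  { apply HT1; [lra|]. unfold z. apply HM. lra. }
  assert (Hw1 := Hn (t + h) hth). assert (Hw0 := Hn t ht).
  set (A := w (t + h) - w t). set (Bn := z n (t + h) - z n t).
  assert (HAB : Rabs ((A - Bn) / h) <= eps / 3).
  { apply Rabs_div_le; auto. unfold A, Bn. apply Rabs_le_e in Hw1. apply Rabs_le_e in Hw0.
    apply Rabs_le. lra. }
  assert (EB : Bn / h = P c (z n c) + Rm (c + INR n * tau) (z n c)).
  { unfold Bn. rewrite Ec. replace (t + h - t) with h by ring. field. auto. }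
  replace (A / h - P t (w t)) with ((A - Bn) / h + (P c (z n c) - P t (w t)) + Rm (c + INR n * tau) (z n c)).
  2:{ replace ((A - Bn)/h) with (A/h - Bn/h) by (field; auto). rewrite EB. ring. }
  apply Rabs_le_e in HAB. apply Rabs_lt_e in HP1. apply Rabs_lt_e in HR1. apply Rabs_lt_i. lra.
Qed.


Lemma LIM : forall S, infoften S -> exists v, forall eps, 0 < eps -> forall N, exists n,
  (N <= n)%nat /\ S n /\ forall t, 0 <= t <= tau -> Rabs (z n t - phi v t) <= eps.
Proof.
  intros S HS. destruct consts as [K [N0 [hK [hN0 HK]]]].
  destruct (cluster z (2 * tau) K M ltac:(lra) hK M_pos (fun n => S n /\ (N0 <= n)%nat)) as [w Hw].
  { intro N. destruct (HS (max N N0)) as [n [hn Sn]]. exists n. split; [lia|]. split; auto; lia. }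
  { intros n _ t ht. unfold z. apply HM.
    assert (0 <= INR n * tau) by (apply Rmult_le_pos; [apply pos_INR|lra]). lra. }
  { intros n [_ hn] t1 t2 h1 h2. apply (z_lip K N0); auto; lra. }
  assert (HD : Dprop w (2 * tau)).
  { apply cluster_D; [lra|]. intros eps he N. destruct (Hw eps he N) as [n [hn [_ Hn]]]. eauto. }
  exists (w 0). intros eps he N. destruct (Hw eps he N) as [n [hn [[Sn _] Hn]]].
  exists n. split; auto. split; auto. intros t ht.
  rewrite <- (glue w (2 * tau) HD ltac:(lra) t ht). apply Hn. lra.
Qed.

Lemma z_next : forall n, z n tau = z (Datatypes.S n) 0.
Proof. intro n. unfold z. rewrite S_INR. f_equal. ring. Qed.

Lemma phi0 : forall v, phi v 0 = v.
Proof. intro v. destruct (phi_sol v) as [A _]. auto. Qed.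

Lemma K1 : forall d eps, 0 < eps -> exists N, forall n, (N <= n)%nat -> d <= z n 0 ->
  phi d tau - eps <= z (Datatypes.S n) 0.
Proof.
  intros d eps he. apply NNPP. intro H.
  set (S := fun n => d <= z n 0 /\ z (Datatypes.S n) 0 < phi d tau - eps).
  assert (HS : infoften S).
  { intro N. apply NNPP. intro H2. apply H. exists N. intros n hn hd.
    apply Rnot_lt_le. intro hl. apply H2. exists n. split; auto. split; auto. }
  destruct (LIM S HS) as [v Hv].
  destruct (Rlt_dec v d) as [hvd|hvd].
  - destruct (Hv ((d - v)/2) ltac:(lra) 0%nat) as [n [_ [[Sn1 Sn2] Hn]]].
    specialize (Hn 0 ltac:(lra)). rewrite phi0 in Hn. apply Rabs_le_e in Hn. lra.
  - assert (Hm : phi d tau <= phi v tau).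
    { apply (noncross d v); try apply phi_sol; lra. }
    destruct (Hv (eps/2) ltac:(lra) 0%nat) as [n [_ [[Sn1 Sn2] Hn]]].
    specialize (Hn tau ltac:(lra)). rewrite z_next in Hn. apply Rabs_le_e in Hn. lra.
Qed.

Lemma K2 : forall d eps, 0 < eps -> exists N, forall n, (N <= n)%nat -> z n 0 <= d ->
  z (Datatypes.S n) 0 <= phi d tau + eps.
Proof.
  intros d eps he. apply NNPP. intro H.
  set (S := fun n => z n 0 <= d /\ phi d tau + eps < z (Datatypes.S n) 0).
  assert (HS : infoften S).
  { intro N. apply NNPP. intro H2. apply H. exists N. intros n hn hd.
    apply Rnot_lt_le. intro hl. apply H2. exists n. split; auto. split; auto. }
  destruct (LIM S HS) as [v Hv].
  destruct (Rlt_dec d v) as [hvd|hvd].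
  - destruct (Hv ((v - d)/2) ltac:(lra) 0%nat) as [n [_ [[Sn1 Sn2] Hn]]].
    specialize (Hn 0 ltac:(lra)). rewrite phi0 in Hn. apply Rabs_le_e in Hn. lra.
  - assert (Hm : phi v tau <= phi d tau).
    { apply (noncross v d); try apply phi_sol; lra. }
    destruct (Hv (eps/2) ltac:(lra) 0%nat) as [n [_ [[Sn1 Sn2] Hn]]].
    specialize (Hn tau ltac:(lra)). rewrite z_next in Hn. apply Rabs_le_e in Hn. lra.
Qed.

Hypothesis Hiso : periodic_solutions_isolated P tau.

Lemma OSC : forall c1 c2, c1 < c2 ->
  (forall N, exists n, (N <= n)%nat /\ z n 0 <= c1) ->
  (forall N, exists n, (N <= n)%nat /\ c2 <= z n 0) -> False.
Proof.
  intros c1 c2 hc H1 H2.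
  assert (Hfix : forall d, c1 < d < c2 -> phi d tau = d).
  { intros d hd. destruct (Rtotal_order (phi d tau) d) as [hl|[he|hg]]; auto; exfalso.
    - destruct (K2 d ((d - phi d tau)/2) ltac:(lra)) as [N HN].
      destruct (H1 N) as [n [hn hzn]].
      assert (Hst : forall k, z (n + k) 0 <= d).
      { induction k as [|k IH]. - rewrite Nat.add_0_r. lra.
        - rewrite Nat.add_succ_r. pose proof (HN (n + k)%nat ltac:(lia) IH). lra. }
      destruct (H2 n) as [m [hm hzm]]. specialize (Hst (m - n)%nat).
      replace (n + (m - n))%nat with m in Hst by lia. lra.
    - destruct (K1 d ((phi d tau - d)/2) ltac:(lra)) as [N HN].
      destruct (H2 N) as [n [hn hzn]].
      assert (Hst : forall k, d <= z (n + k) 0).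
      { induction k as [|k IH]. - rewrite Nat.add_0_r. lra.
        - rewrite Nat.add_succ_r. pose proof (HN (n + k)%nat ltac:(lia) IH). lra. }
      destruct (H1 n) as [m [hm hzm]]. specialize (Hst (m - n)%nat).
      replace (n + (m - n))%nat with m in Hst by lia. lra. }
  set (d0 := (c1 + c2) / 2).
  destruct (Hiso d0) as [del [hdel Hdel]].
  { exists (phi d0). split; [apply phi_sol|]. apply Hfix. unfold d0; lra. }
  set (u := d0 + Rmin del ((c2 - c1)/2) / 2).
  assert (hm : 0 < Rmin del ((c2 - c1)/2)) by (apply Rmin_pos; lra).
  pose proof (Rmin_l del ((c2 - c1)/2)). pose proof (Rmin_r del ((c2 - c1)/2)).
  apply (Hdel u).
  - unfold u. lra.
  - unfold u. replace (d0 + Rmin del ((c2 - c1) / 2) / 2 - d0) with (Rmin del ((c2 - c1) / 2) / 2) by ring.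
    rewrite Rabs_right; lra.
  - exists (phi u). split; [apply phi_sol|]. apply Hfix. unfold u, d0 in *. lra.
Qed.

Lemma a_conv : exists v, forall eps, 0 < eps -> exists N, forall n, (N <= n)%nat -> Rabs (z n 0 - v) <= eps.
Proof.
  destruct (LIM (fun _ => True)) as [v Hv]. { intro N. exists N. auto. }
  exists v. intros eps0 he0. apply NNPP. intro H.
  assert (Hfar : forall N, exists n, (N <= n)%nat /\ eps0 < Rabs (z n 0 - v)).
  { intro N. apply NNPP. intro H2. apply H. exists N. intros n hn. apply Rnot_lt_le. intro hl. apply H2. eauto. }
  assert (Hnear : forall N, exists n, (N <= n)%nat /\ Rabs (z n 0 - v) <= eps0 / 4).
  { intro N. destruct (Hv (eps0/4) ltac:(lra) N) as [n [hn [_ Hn]]]. exists n. split; auto.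
    specialize (Hn 0 ltac:(lra)). rewrite phi0 in Hn. auto. }
  destruct (classic (forall N, exists n, (N <= n)%nat /\ v + eps0 <= z n 0)) as [Ha|Ha].
  - apply (OSC (v + eps0/4) (v + eps0)); [lra| |auto].
    intro N. destruct (Hnear N) as [n [hn Hn]]. exists n. split; auto. apply Rabs_le_e in Hn. lra.
  - apply not_all_ex_not in Ha. destruct Ha as [N1 HN1].
    apply (OSC (v - eps0) (v - eps0/4)); [lra| |].
    + intro N. destruct (Hfar (max N N1)) as [n [hn Hn]]. exists n. split; [lia|].
      destruct (Rle_dec (v + eps0) (z n 0)) as [h|h].
      { exfalso. apply HN1. exists n. split; [lia|auto]. }
      unfold Rabs in Hn. destruct (Rcase_abs (z n 0 - v)); lra.
    + intro N. destruct (Hnear N) as [n [hn Hn]]. exists n. split; auto. apply Rabs_le_e in Hn. lra.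
Qed.


Lemma final : exists p : R -> R,
    cont_Rp p /\
    (forall t, 0 <= t -> p (t + tau) = p t) /\
    (forall eps, 0 < eps -> exists T, forall t, T <= t -> Rabs (y t - p t) < eps).
Proof.
  destruct a_conv as [v Hv].
  assert (Hfixv : phi v tau = v).
  { destruct (LIM (fun _ => True)) as [v' Hv']. { intro N. exists N. auto. }
    assert (Evv : v' = v).
    { apply Rle_antisym; apply le_eps; intros e he.
      - destruct (Hv (e/2) ltac:(lra)) as [N HN]. destruct (Hv' (e/2) ltac:(lra) N) as [n [hn [_ Hn]]].
        specialize (Hn 0 ltac:(lra)). rewrite phi0 in Hn. specialize (HN n hn).
        apply Rabs_le_e in Hn; apply Rabs_le_e in HN. lra.
      - destruct (Hv (e/2) ltac:(lra)) as [N HN]. destruct (Hv' (e/2) ltac:(lra) N) as [n [hn [_ Hn]]].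
        specialize (Hn 0 ltac:(lra)). rewrite phi0 in Hn. specialize (HN n hn).
        apply Rabs_le_e in Hn; apply Rabs_le_e in HN. lra. }
    subst v'.
    apply Rle_antisym; apply le_eps; intros e he.
    - destruct (Hv (e/2) ltac:(lra)) as [N HN]. destruct (Hv' (e/2) ltac:(lra) N) as [n [hn [_ Hn]]].
      specialize (Hn tau ltac:(lra)). rewrite z_next in Hn. specialize (HN (Datatypes.S n) ltac:(lia)).
      apply Rabs_le_e in Hn; apply Rabs_le_e in HN. lra.
    - destruct (Hv (e/2) ltac:(lra)) as [N HN]. destruct (Hv' (e/2) ltac:(lra) N) as [n [hn [_ Hn]]].
      specialize (Hn tau ltac:(lra)). rewrite z_next in Hn. specialize (HN (Datatypes.S n) ltac:(lia)).
      apply Rabs_le_e in Hn; apply Rabs_le_e in HN. lra. }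
  assert (Hper : forall t, 0 <= t -> phi v (t + tau) = phi v t).
  { intros t ht. assert (S1 := sol_shift _ _ _ tau (phi_sol v) Htau).
    rewrite Hfixv in S1.
    assert (S2 : is_solution P v (fun s => phi v (s + tau))).
    { apply (sol_ext (shift P tau)); auto. intros s x hs. unfold shift. apply P_per1; auto. }
    exact (uniqP v _ _ S2 (phi_sol v) t ht). }
  assert (Hpern : forall n s, 0 <= s -> phi v (s + INR n * tau) = phi v s).
  { induction n as [|n IH]; intros s hs.
    - simpl. rewrite Rmult_0_l, Rplus_0_r. auto.
    - rewrite S_INR. replace (s + (INR n + 1) * tau) with ((s + INR n * tau) + tau) by ring.
      rewrite Hper; [apply IH; auto|]. assert (0 <= INR n * tau) by (apply Rmult_le_pos; [apply pos_INR|lra]). lra. }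
  assert (Hunif : forall eps, 0 < eps -> exists N, forall n, (N <= n)%nat -> forall s, 0 <= s <= tau ->
      Rabs (z n s - phi v s) < eps).
  { intros eps he. apply NNPP. intro H.
    set (S := fun n => exists s, 0 <= s <= tau /\ eps <= Rabs (z n s - phi v s)).
    assert (HS : infoften S).
    { intro N. apply NNPP. intro H2. apply H. exists N. intros n hn s hs. apply Rnot_le_lt. intro hl.
      apply H2. exists n. split; auto. exists s. auto. }
    destruct (LIM S HS) as [v' Hv'].
    assert (Evv : v' = v).
    { apply Rle_antisym; apply le_eps; intros e he'.
      - destruct (Hv (e/2) ltac:(lra)) as [N HN]. destruct (Hv' (e/2) ltac:(lra) N) as [n [hn [_ Hn]]].
        specialize (Hn 0 ltac:(lra)). rewrite phi0 in Hn. specialize (HN n hn).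
        apply Rabs_le_e in Hn; apply Rabs_le_e in HN. lra.
      - destruct (Hv (e/2) ltac:(lra)) as [N HN]. destruct (Hv' (e/2) ltac:(lra) N) as [n [hn [_ Hn]]].
        specialize (Hn 0 ltac:(lra)). rewrite phi0 in Hn. specialize (HN n hn).
        apply Rabs_le_e in Hn; apply Rabs_le_e in HN. lra. }
    subst v'. destruct (Hv' (eps/2) ltac:(lra) 0%nat) as [n [_ [[s [hs Hs]] Hn]]].
    specialize (Hn s hs). lra. }
  exists (phi v). split; [|split].
  - intros t ht eps he. destruct ht as [ht|ht].
    + assert (C := sol_contpt _ _ _ t (phi_sol v) ht).
      destruct (C eps he) as [al [hal Hal]]. exists al. split; auto. intros t' ht' hd.
      destruct (Req_dec t' t) as [E|E].
      { subst. replace (phi v t - phi v t) with 0 by ring. rewrite Rabs_R0; auto. }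
      apply (Hal t'). split; [split; [exact I|auto]|]. exact hd.
    + subst t. destruct (sol_rcont _ _ _ (phi_sol v) eps he) as [d [hd Hd]].
      exists d. split; auto. intros t' ht' hd'. destruct ht' as [ht'|ht'].
      * apply Hd. rewrite Rminus_0_r in hd'. rewrite Rabs_right in hd' by lra. lra.
      * subst. replace (phi v 0 - phi v 0) with 0 by ring. rewrite Rabs_R0; auto.
  - exact Hper.
  - intros eps he. destruct (Hunif eps he) as [N HN].
    exists (INR (Datatypes.S N) * tau). intros t ht.
    assert (0 <= INR (Datatypes.S N) * tau) by (apply Rmult_le_pos; [apply pos_INR|lra]).
    destruct (floor_exists tau Htau t ltac:(lra)) as [i Hi].
    assert (hiN : (N <= i)%nat).
    { apply INR_le. rewrite S_INR in ht.
      apply (Rmult_le_reg_r tau); auto. lra. }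
    specialize (HN i hiN (t - INR i * tau) ltac:(lra)).
    unfold z in HN. replace (t - INR i * tau + INR i * tau) with t in HN by ring.
    replace (phi v t) with (phi v (t - INR i * tau + INR i * tau)) by (f_equal; ring).
    rewrite Hpern by lra. exact HN.
Qed.

End Main.

Theorem mainTheorem15 (tau : R) (f P Rm : R -> R -> R) (u0 : R) (y : R -> R) :
  0 < tau ->
  regular f ->
  asympt_periodic_decomp tau f P Rm ->
  periodic_solutions_isolated P tau ->
  is_solution f u0 y ->
  (exists M, forall t, 0 <= t -> Rabs (y t) <= M) ->
  exists p : R -> R,
    cont_Rp p /\
    (forall t, 0 <= t -> p (t + tau) = p t) /\
    (forall eps, 0 < eps -> exists T, forall t, T <= t -> Rabs (y t - p t) < eps).
Proof.
  intros Htau Hreg Hdec Hiso Hy [M HM].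
  exact (final tau f P Rm Htau Hreg Hdec u0 y M Hy HM Hiso).
Qed.
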